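(* Let $d\ge3$ and $d^2-d+2\le g\le d^2-1$, and let $A\in SM_d(\mathbb C)^g$ be such that $\mathcal D_A$ is bounded. Then the convex set $\mathcal D_A(1)\subseteq\mathbb R^g$ is not self-dual, i.e. $\mathcal D_A(1)\ne\{x\in\mathbb R^g:\sum_ix_iy_i\le1\ \forall y\in\mathcal D_A(1)\}$. Consequently $\mathcal D_A$ is not self-dual: $\mathcal D_A\neq\mathcal D_A^\circ$.
   Context: $SM_d(\mathbb C)^g$ denotes $g$-tuples of self-adjoint $d\times d$ complex matrices. $\mathcal D_A=\bigcup_n\mathcal D_A(n)$ with $\mathcal D_A(n)=\{X\in SM_n(\mathbb C)^g: I-\sum_iA_i\otimes X_i\succeq0\}$, so $\mathcal D_A(1)=\{x\in\mathbb R^g:I-\sum_ix_iA_i\succeq0\}$. The free polar dual of a matrix convex set $K$ is $K^\circ=\{X\in SM^g:\sum_iY_i\otimes X_i\preceq I\ \forall Y\in K\}$. *)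

(* Defs.v *)
From mathcomp Require Import all_boot all_order all_algebra.
From mathcomp Require Import complex mxtens.
From mathcomp Require Import reals.
Set Implicit Arguments. Unset Strict Implicit. Unset Printing Implicit Defensive.
Import Order.TTheory GRing.Theory Num.Theory.
Local Open Scope ring_scope.

Section LMI.
Variable R : rcfType.
Local Notation C := (R[i]).

Definition adjmx m n (M : 'M[C]_(m, n)) : 'M[C]_(n, m) := (map_mx Num.conj M)^T.

Definition selfadjmx n (M : 'M[C]_n) : Prop := adjmx M = M.

Definition psdmx n (M : 'M[C]_n) : Prop :=
  selfadjmx M /\ forall v : 'cV[C]_n, 0 <= (adjmx v *m M *m v) 0 0.

Definition SMtuple g n (X : 'I_g -> 'M[C]_n) : Prop := forall i, selfadjmx (X i).

(* a graded set (free set) of g-tuples: one subset for each size n *)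
Definition freeset g := forall n : nat, ('I_g -> 'M[C]_n) -> Prop.

Definition LMIdom g d (A : 'I_g -> 'M[C]_d) : freeset g :=
  fun n X => SMtuple X /\ psdmx (1%:M - \sum_(i < g) (A i *t X i)).

Definition freebounded g (K : freeset g) : Prop :=
  exists N : nat, forall n (X : 'I_g -> 'M[C]_n), K n X ->
    forall i, psdmx (N%:R%:M - X i) /\ psdmx (N%:R%:M + X i).

Definition freepolar g (K : freeset g) : freeset g :=
  fun n X => SMtuple X /\
    forall m (Y : 'I_g -> 'M[C]_m), K m Y -> psdmx (1%:M - \sum_(i < g) (Y i *t X i)).

Definition LMIdom1 g d (A : 'I_g -> 'M[C]_d) : ('I_g -> R) -> Prop :=
  fun x => psdmx (1%:M - \sum_(i < g) ((x i)%:C%C *: A i)).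

Definition polar1 g (K : ('I_g -> R) -> Prop) : ('I_g -> R) -> Prop :=
  fun x => forall y, K y -> \sum_(i < g) x i * y i <= 1.

End LMI.

(* Main.v *)
Require Import Defs.
From mathcomp Require Import all_boot all_order all_algebra.
From mathcomp Require Import complex mxtens.
From mathcomp Require Import reals.
From mathcomp Require Import ring lra zify.
Import Order.TTheory GRing.Theory Num.Theory.
Local Open Scope ring_scope.
Local Open Scope complex_scope.
Set Implicit Arguments. Unset Strict Implicit. Unset Printing Implicit Defensive.

Lemma exists_kernel (R : fieldType) g (I : finType) (F : I -> 'I_g -> R) : (#|I| < g)%N ->
  exists y : 'I_g -> R, (exists j, y j != 0) /\ forall J, \sum_i y i * F J i = 0.
Proof.
move=> hI.
pose M : 'M[R]_(g, #|I|) := \matrix_(i, j) F (enum_val j) i.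
have hr : (0 < \rank (kermx M))%N.
  rewrite mxrank_ker subn_gt0; apply: leq_ltn_trans (rank_leq_col M) hI.
have hK : kermx M != 0 by rewrite -mxrank_eq0 -lt0n.
have /existsP[i /existsP[j hij]] : [exists i, [exists j, kermx M i j != 0]].
  case: (boolP [exists i, [exists j, kermx M i j != 0]]) => // /existsPn h.
  exfalso; move/eqP: hK; apply; apply/matrixP => i j.
  by have /existsPn/(_ j)/negPn/eqP -> := h i; rewrite mxE.
exists (fun k => kermx M i k); split; first by exists j.
move=> J; have := congr1 (fun X : 'M[R]_(g, #|I|) => X i (enum_rank J)) (mulmx_ker M).
rewrite !mxE => h; rewrite -[RHS]h; apply: eq_bigr => k _; congr (_ * _); rewrite /M mxE enum_rankK //.
Qed.

Section Basic.
Variable R : realType.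
Local Notation C := (R[i]).

Lemma adjmxM m n p (M1 : 'M[C]_(m, n)) (M2 : 'M[C]_(n, p)) :
  adjmx (M1 *m M2) = adjmx M2 *m adjmx M1.
Proof. by rewrite /adjmx map_mxM trmx_mul. Qed.

Lemma adjmxK m n (M : 'M[C]_(m, n)) : adjmx (adjmx M) = M.
Proof. by apply/matrixP=> i j; rewrite !mxE conjCK. Qed.

Lemma adjmxD m n (M1 M2 : 'M[C]_(m, n)) : adjmx (M1 + M2) = adjmx M1 + adjmx M2.
Proof. by apply/matrixP=> i j; rewrite !mxE rmorphD. Qed.

Lemma adjmxN m n (M : 'M[C]_(m, n)) : adjmx (- M) = - adjmx M.
Proof. by apply/matrixP=> i j; rewrite !mxE rmorphN. Qed.

Lemma adjmxB m n (M1 M2 : 'M[C]_(m, n)) : adjmx (M1 - M2) = adjmx M1 - adjmx M2.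
Proof. by rewrite adjmxD adjmxN. Qed.

Lemma adjmxZ m n c (M : 'M[C]_(m, n)) : adjmx (c *: M) = c^* *: adjmx M.
Proof. by apply/matrixP=> i j; rewrite !mxE rmorphM. Qed.

Lemma adjmx_sum m n I (r : seq I) (P : pred I) (F : I -> 'M[C]_(m, n)) :
  adjmx (\sum_(i <- r | P i) F i) = \sum_(i <- r | P i) adjmx (F i).
Proof.
elim: r => [|a r IH]; rewrite ?big_nil ?big_cons.
  by apply/matrixP=> i j; rewrite !mxE rmorph0.
by case: (P a); rewrite ?adjmxD IH.
Qed.

Lemma adjmx_scalar n c : adjmx (c%:M : 'M[C]_n) = c^*%:M.
Proof. by apply/matrixP=> i j; rewrite !mxE eq_sym; case: eqP; rewrite ?rmorph0 ?mulr1n ?mulr0n. Qed.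

Lemma adjmx1 n : adjmx (1%:M : 'M[C]_n) = 1%:M.
Proof. by rewrite adjmx_scalar conjC1. Qed.

Lemma conj_real (x : R) : Num.conj (x%:C) = x%:C :> C.
Proof. by apply: conj_Creal; rewrite complex_real. Qed.

Definition q n (u : 'cV[C]_n) (M : 'M[C]_n) : C := (adjmx u *m M *m u) 0 0.
Definition Q n (u : 'cV[C]_n) (M : 'M[C]_n) : R := complex.Re (q u M).

Lemma qD n u (M1 M2 : 'M[C]_n) : q u (M1 + M2) = q u M1 + q u M2.
Proof. by rewrite /q mulmxDr mulmxDl mxE. Qed.
Lemma qN n u (M : 'M[C]_n) : q u (- M) = - q u M.
Proof. by rewrite /q mulmxN mulNmx mxE. Qed.
Lemma qB n u (M1 M2 : 'M[C]_n) : q u (M1 - M2) = q u M1 - q u M2.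
Proof. by rewrite qD qN. Qed.
Lemma qZ n u c (M : 'M[C]_n) : q u (c *: M) = c * q u M.
Proof. by rewrite /q -scalemxAr -scalemxAl mxE. Qed.
Lemma q_sum n u I (r : seq I) (P : pred I) (F : I -> 'M[C]_n) :
  q u (\sum_(i <- r | P i) F i) = \sum_(i <- r | P i) q u (F i).
Proof.
elim: r => [|a r IH]; rewrite ?big_nil ?big_cons.
  by rewrite /q mulmx0 mul0mx mxE.
by case: (P a); rewrite ?qD IH.
Qed.

Lemma ReD (a b : C) : complex.Re (a + b) = complex.Re a + complex.Re b. Proof. by case: a; case: b. Qed.
Lemma ReN (a : C) : complex.Re (- a) = - complex.Re a. Proof. by case: a. Qed.
Lemma ReB (a b : C) : complex.Re (a - b) = complex.Re a - complex.Re b. Proof. by rewrite ReD ReN. Qed.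
Lemma ReM_real (c : R) (a : C) : complex.Re (c%:C * a) = c * complex.Re a.
Proof. by case: a => x y /=; rewrite mul0r subr0. Qed.
Lemma Re_sum I (r : seq I) (P : pred I) (F : I -> C) :
  complex.Re (\sum_(i <- r | P i) F i) = \sum_(i <- r | P i) complex.Re (F i).
Proof. elim: r => [|a r IH]; rewrite ?big_nil ?big_cons //.
by case: (P a); rewrite ?ReD IH. Qed.
Lemma Re_real (c : R) : complex.Re (c%:C) = c. Proof. by []. Qed.

Lemma q_adj n u (M : 'M[C]_n) : (q u M)^* = q u (adjmx M).
Proof.
rewrite /q; have -> : adjmx u *m adjmx M *m u = adjmx (adjmx u *m M *m u).
  by rewrite !adjmxM adjmxK mulmxA.
by rewrite /adjmx [in RHS]mxE [in RHS]mxE.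
Qed.

Lemma q_selfadj n u (M : 'M[C]_n) : selfadjmx M -> q u M = (Q u M)%:C.
Proof.
move=> hM; have: (q u M)^* = q u M by rewrite q_adj hM.
rewrite /Q; move/CrealP; case: (q u M) => a b; rewrite complex_real => /eqP ->.
by [].
Qed.

Lemma psd_Q n (M : 'M[C]_n) u : psdmx M -> 0 <= Q u M.
Proof. by case=> _ /(_ u); rewrite lecE => /andP[_]. Qed.

Lemma Q_psd n (M : 'M[C]_n) : selfadjmx M -> (forall u, 0 <= Q u M) -> psdmx M.
Proof. by move=> hM hQ; split=> // u; rewrite -/(q u M) (q_selfadj u hM) ler0c. Qed.

Lemma QD n u (M1 M2 : 'M[C]_n) : Q u (M1 + M2) = Q u M1 + Q u M2.
Proof. by rewrite /Q qD ReD. Qed.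
Lemma QN n u (M : 'M[C]_n) : Q u (- M) = - Q u M.
Proof. by rewrite /Q qN ReN. Qed.
Lemma QB n u (M1 M2 : 'M[C]_n) : Q u (M1 - M2) = Q u M1 - Q u M2.
Proof. by rewrite /Q qB ReB. Qed.
Lemma QZ n u c (M : 'M[C]_n) : Q u (c%:C *: M) = c * Q u M.
Proof. by rewrite /Q qZ ReM_real. Qed.
Lemma Q_sum n u I (r : seq I) (P : pred I) (F : I -> 'M[C]_n) :
  Q u (\sum_(i <- r | P i) F i) = \sum_(i <- r | P i) Q u (F i).
Proof. by rewrite /Q q_sum Re_sum. Qed.

Lemma Q1E n (u : 'cV[C]_n) :
  Q u 1%:M = \sum_k (complex.Re (u k 0) ^+ 2 + complex.Im (u k 0) ^+ 2).
Proof.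
rewrite /Q /q mulmx1 mxE Re_sum; apply: eq_bigr => k _; rewrite !mxE.
case: (u k 0) => a b /=; rewrite !expr2; lra.
Qed.

Lemma Q1_ge0 n (u : 'cV[C]_n) : 0 <= Q u 1%:M.
Proof.
rewrite Q1E; apply: sumr_ge0 => k _; apply: addr_ge0; apply: sqr_ge0.
Qed.

Definition bf n (u v : 'cV[C]_n) (M : 'M[C]_n) : C := (adjmx u *m M *m v) 0 0.

Lemma q_addZ n (u v : 'cV[C]_n) c M :
  q (u + c *: v) M = q u M + c * bf u v M + Num.conj c * bf v u M
     + Num.conj c * c * q v M.
Proof.
rewrite /q /bf adjmxD adjmxZ !mulmxDl !mulmxDr -!scalemxAl -!scalemxAr !mxE.
ring.
Qed.

Lemma bf_adj n (u v : 'cV[C]_n) M : Num.conj (bf v u M) = bf u v (adjmx M).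
Proof.
rewrite /bf; have -> : adjmx u *m adjmx M *m v = adjmx (adjmx v *m M *m u).
  by rewrite !adjmxM adjmxK mulmxA.
by rewrite /adjmx [in RHS]mxE [in RHS]mxE.
Qed.

Lemma polar_scalar (z : C) : z + Num.conj z = 0 ->
  (0 +i* 1) * z + Num.conj (0 +i* 1) * Num.conj z = 0 -> z = 0.
Proof.
case: z => x y. change (Num.conj (x +i* y)) with (x -i* y).
change (Num.conj (0 +i* 1 : C)) with ((0:R) -i* 1).
simpc; move/eqP; rewrite eq_complex /= => /andP[/eqP hx _] /eqP.
rewrite eq_complex /= => /andP[/eqP hy _].
apply/eqP; rewrite eq_complex /=; apply/andP; split; apply/eqP; lra.
Qed.

Lemma polarize n (u v : 'cV[C]_n) M : selfadjmx M ->
  (forall c, q (u + c *: v) M = 0) -> q u M = 0 -> q v M = 0 -> bf u v M = 0.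
Proof.
move=> hM hc hu hv; apply: polar_scalar.
  have := hc 1; rewrite q_addZ hu hv rmorph1 !mul1r addr0 add0r.
  by rewrite -[bf v u M]conjCK bf_adj hM.
have := hc (0 +i* 1); rewrite q_addZ hu hv mulr0 addr0 add0r.
by rewrite -[bf v u M]conjCK bf_adj hM.
Qed.

Lemma ImD (a b : C) : complex.Im (a + b) = complex.Im a + complex.Im b. Proof. by case: a; case: b. Qed.
Lemma ImM_real (c : R) (a : C) : complex.Im (c%:C * a) = c * complex.Im a.
Proof. by case: a => x y /=; rewrite mul0r addr0. Qed.
Lemma Im_sum I (r : seq I) (P : pred I) (F : I -> C) :
  complex.Im (\sum_(i <- r | P i) F i) = \sum_(i <- r | P i) complex.Im (F i).
Proof. elim: r => [|a r IH]; rewrite ?big_nil ?big_cons //.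
by case: (P a); rewrite ?ImD IH. Qed.
Lemma complex_eq0 (z : C) : complex.Re z = 0 -> complex.Im z = 0 -> z = 0.
Proof. by case: z => a b /= -> ->. Qed.

Lemma entry_mul n k1 k2 (P : 'M[C]_(k1,n)) (M : 'M_n) (Qm : 'M_(k2,n)) j l :
  (P *m M *m Qm^T) j l = (row j P *m M *m (row l Qm)^T) 0 0.
Proof.
rewrite !mxE; apply: eq_bigr => x _; rewrite !mxE; congr (_ * _).
by apply: eq_bigr => y _; rewrite !mxE.
Qed.

Local Notation nc := (@Normc.normc R).

Lemma nc_ge0 (z : C) : 0 <= nc z.
Proof. by case: z => a b; apply: sqrtr_ge0. Qed.

Lemma Re_le_nc (z : C) : `|complex.Re z| <= nc z.
Proof.
case: z => a b /=; rewrite -sqrtr_sqr; apply: ler_wsqrtr.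
by rewrite lerDl sqr_ge0.
Qed.

Lemma nc_sqr (z : C) : nc z ^+ 2 = complex.Re z ^+ 2 + complex.Im z ^+ 2.
Proof. by case: z => a b /=; rewrite sqr_sqrtr // addr_ge0 // sqr_ge0. Qed.

Lemma nc_conj (z : C) : nc (Num.conj z) = nc z.
Proof. by case: z => a b; rewrite /= sqrrN. Qed.

Lemma nc_sum I (r : seq I) (P : pred I) (F : I -> C) :
  nc (\sum_(i <- r | P i) F i) <= \sum_(i <- r | P i) nc (F i).
Proof.
elim: r => [|a r IH]; rewrite ?big_nil ?big_cons; first by rewrite Normc.normc0.
case: (P a) => //; apply: le_trans (le_normcD _ _) _; exact: lerD.
Qed.
Lemma crude n (G : 'M[C]_n) : exists2 c : R, 0 <= c &
  forall u, `|complex.Re (q u G)| <= c * Q u 1%:M.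
Proof.
exists (\sum_j \sum_i nc (G i j)).
  by apply: sumr_ge0 => j _; apply: sumr_ge0 => i _; apply: nc_ge0.
move=> u; set T := Q u 1%:M.
have hT : T = \sum_k nc (u k 0) ^+ 2.
  by rewrite /T Q1E; apply: eq_bigr => k _; rewrite nc_sqr.
have hk : forall k, nc (u k 0) ^+ 2 <= T.
  move=> k; rewrite hT (bigD1 k) //= lerDl.
  by apply: sumr_ge0 => i _; apply: sqr_ge0.
have hij : forall i j, nc (u i 0) * nc (u j 0) <= T.
  move=> i j; have := hk i; have := hk j; have := sqr_ge0 (nc (u i 0) - nc (u j 0)).
  nra.
apply: le_trans (Re_le_nc _) _.
rewrite /q mxE; apply: le_trans (nc_sum _ _ _) _.
rewrite mulr_suml; apply: ler_sum => j _.
rewrite mxE Normc.normcM; apply: le_trans.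
  apply: ler_wpM2r; first exact: nc_ge0.
  exact: nc_sum.
rewrite mulr_suml mulr_suml; apply: ler_sum => i _.
rewrite !mxE Normc.normcM nc_conj.
have := hij i j; have := nc_ge0 (G i j); have := nc_ge0 (u i 0); have := nc_ge0 (u j 0).
nra.
Qed.

End Basic.

Section Core.
Variable R : realType.
Local Notation C := (R[i]).
Variables (g d : nat) (A : 'I_g -> 'M[C]_d).
Hypothesis hA : forall j, selfadjmx (A j).

Definition L (x : 'I_g -> R) : 'M[C]_d := \sum_(i < g) (x i)%:C *: A i.

Lemma L_selfadj x : selfadjmx (L x).
Proof.
rewrite /selfadjmx /L adjmx_sum; apply: eq_bigr => i _.
by rewrite adjmxZ conj_real hA.
Qed.

Lemma L_lin a b x y : L (fun i => a * x i + b * y i) = a%:C *: L x + b%:C *: L y.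
Proof.
rewrite /L !scaler_sumr -big_split /=; apply: eq_bigr => i _.
by rewrite rmorphD !rmorphM /= scalerDl !scalerA.
Qed.

Lemma QL u x : Q u (L x) = \sum_i x i * Q u (A i).
Proof. by rewrite /L Q_sum; apply: eq_bigr => i _; rewrite QZ. Qed.

Definition K x := psdmx (1%:M - L x).

Lemma sumsq_ge0 (y : 'I_g -> R) : 0 <= \sum_i y i ^+ 2.
Proof. by apply: sumr_ge0 => i _; apply: sqr_ge0. Qed.

Lemma sumsq_gt0 (y : 'I_g -> R) j : y j != 0 -> 0 < \sum_i y i ^+ 2.
Proof.
move=> hj; rewrite (bigD1 j) //=; apply: ltr_pwDl; last first.
  by apply: sumr_ge0 => i _; apply: sqr_ge0.
by rewrite exprn_even_gt0 //.
Qed.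

Variable i0 : 'I_g.
Definition e0 : 'I_g -> R := fun i => (i == i0)%:R.

Lemma sum_e0 (f : 'I_g -> R) : \sum_i e0 i * f i = f i0.
Proof.
rewrite (bigD1 i0) //= big1 ?addr0 /e0 ?eqxx ?mul1r // => i /negPf ->.
by rewrite mul0r.
Qed.

Lemma L_e0 : L e0 = A i0.
Proof.
rewrite /L (bigD1 i0) //= big1 ?addr0 /e0 ?eqxx ?rmorph1 ?scale1r // => i /negPf ->.
by rewrite rmorph0 scale0r.
Qed.

Lemma sumsq_e0 s (y : 'I_g -> R) : y i0 = 0 ->
  \sum_i (e0 i + s * y i) ^+ 2 = 1 + s ^+ 2 * \sum_i y i ^+ 2.
Proof.
move=> hy; rewrite (bigD1 i0) //= [in RHS](bigD1 i0) //= hy /e0 eqxx.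
rewrite mulr0 addr0 expr1n expr0n /= add0r mulr_sumr; congr (_ + _).
by apply: eq_bigr => i /negPf ->; rewrite add0r exprMn.
Qed.

Hypothesis H1 : forall x, K x -> \sum_i x i ^+ 2 <= 1.
Hypothesis H2 : forall x, \sum_i x i ^+ 2 <= 1 -> K x.

Lemma L0 : L (fun _ => 0) = 0.
Proof. by rewrite /L big1 // => i _; rewrite rmorph0 scale0r. Qed.

Lemma kerQ v y : A i0 *m v = v -> y i0 = 0 -> Q v (L y) = 0.
Proof.
move=> hv hy.
set S := \sum_i y i ^+ 2; set V := Q v 1%:M; set a := Q v (L y).
have hV : 0 <= V by apply: Q1_ge0.
have hS : 0 <= S by apply: sumsq_ge0.
have hA0 : Q v (A i0) = V by rewrite /V /Q /q -mulmxA hv mulmx1.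
have key : forall s, s * a <= s ^+ 2 * (S * V).
  move=> s; set D := 1 + s ^+ 2 * S.
  have hs2 := sqr_ge0 s.
  have hD : 1 <= D by rewrite /D; nra.
  have hD0 : 0 < D by apply: lt_le_trans hD.
  set w := D^-1.
  have hw : w * D = 1 by rewrite /w mulVf // gt_eqF.
  pose z := fun i => w * e0 i + (w * s) * y i.
  have Kz : K z.
    apply: H2.
    have -> : \sum_i z i ^+ 2 = w ^+ 2 * \sum_i (e0 i + s * y i) ^+ 2.
      rewrite mulr_sumr; apply: eq_bigr => i _; rewrite /z -mulrA -mulrDr exprMn //.
    rewrite sumsq_e0 // -/S -/D.
    have hw0 : 0 <= w by rewrite /w invr_ge0 ltW.
    nra.
  have := psd_Q v Kz; rewrite /z L_lin QB QD !QZ L_e0 hA0 -/V -/a => h.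
  have h' := mulr_ge0 (ltW hD0) h.
  have hDd : D = 1 + s ^+ 2 * S by [].
  have -> : s ^+ 2 * (S * V) = D * V - V by rewrite hDd; ring.
  have : D * (V - (w * V + w * s * a)) = D * V - V - s * a.
    by rewrite mulrBr mulrDr !mulrA (mulrC D w) hw; ring.
  lra.
set t := S * V + 1.
have ht : 0 < t by rewrite /t; nra.
set w := t^-1.
have hw : w * t = 1 by rewrite /w mulVf // gt_eqF.
have hw0 : 0 < w by rewrite /w invr_gt0.
have := key (a * w).
move=> h.
have e : (a * w) ^+ 2 * (S * V) = a * w * a - a ^+ 2 * w ^+ 2.
  have -> : S * V = t - 1 by rewrite /t; ring.
  transitivity (a ^+ 2 * w * (w * t) - a ^+ 2 * w ^+ 2); first by ring.
  by rewrite hw; ring.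
have h2 : a ^+ 2 * w ^+ 2 <= 0 by move: h; rewrite e; lra.
have : a ^+ 2 * w ^+ 2 == 0.
  by rewrite eq_le h2 /= mulr_ge0 // sqr_ge0.
by rewrite mulf_eq0 !expf_eq0 /= (gt_eqF hw0) orbF => /eqP.
Qed.

Definition N := 1%:M - A i0.

Lemma kerN (v : 'cV[C]_d) : N *m v = 0 -> A i0 *m v = v.
Proof. by rewrite /N mulmxBl mul1mx => /eqP; rewrite subr_eq0 => /eqP <-. Qed.

Lemma sum_e0' (f : 'I_g -> R) : \sum_i f i * e0 i = f i0.
Proof. by rewrite -(sum_e0 f); apply: eq_bigr => i _; rewrite mulrC. Qed.

Lemma qker (w : 'cV[C]_d) y : A i0 *m w = w -> y i0 = 0 -> q w (L y) = 0.
Proof. by move=> hw hy; rewrite (q_selfadj _ (L_selfadj y)) kerQ. Qed.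

Hypothesis hg : forall k, (k <= d)%N -> (2 * (k * (d - k)) + 1 < g)%N.

Lemma exists_y : exists y : 'I_g -> R,
  (exists j, y j != 0) /\ y i0 = 0 /\ forall v : 'cV[C]_d, N *m v = 0 -> L y *m v = 0.
Proof.
set Kmx := kermx N^T.
set Vr := row_base Kmx.
set k := \rank Kmx.
set V' := map_mx Num.conj Vr.
set Cp := row_base (V'^C)%MS.
set r := \rank (V'^C)%MS.
pose F : option ('I_r * 'I_k * bool) -> 'I_g -> R := fun J i =>
  match J with None => e0 i
  | Some (j, l, b) => let z := (Cp *m A i *m Vr^T) j l in
      if b then complex.Re z else complex.Im z end.
have hcard : (#|{: option ('I_r * 'I_k * bool)}| < g)%N.
  rewrite card_option !card_prod !card_ord card_bool.
  have hr : r = (d - k)%N.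
    by rewrite /r mxrank_compl /V' mxrank_map /Vr (eq_row_base Kmx).
  have hk : (k <= d)%N by apply: rank_leq_row.
  have := hg hk; rewrite hr; lia.
have [y [hy0 hy]] := exists_kernel F hcard.
have hyi0 : y i0 = 0 by have := hy None; rewrite /F sum_e0'.
exists y; split => //; split => //.
have hCp : Cp *m L y *m Vr^T = 0.
  apply/matrixP => j l; rewrite [RHS]mxE.
  have ez : (Cp *m L y *m Vr^T) j l = \sum_i (y i)%:C * (Cp *m A i *m Vr^T) j l.
    rewrite /L mulmx_sumr mulmx_suml summxE; apply: eq_bigr => i _.
    by rewrite -scalemxAr -scalemxAl mxE.
  have hre := hy (Some (j, l, true)); have him := hy (Some (j, l, false)).
  rewrite /F /= in hre him.
  rewrite ez; apply: complex_eq0.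
    by rewrite Re_sum -[X in _ = X]hre; apply: eq_bigr => i _; rewrite ReM_real.
  by rewrite Im_sum -[X in _ = X]him; apply: eq_bigr => i _; rewrite ImM_real.
have inKer j : N *m (row j Vr)^T = 0.
  have : (row j Vr <= Kmx)%MS.
    by apply: submx_trans (row_sub j Vr) _; rewrite /Vr (eq_row_base Kmx).
  by move/sub_kermxP => h; rewrite -[N]trmxK -trmx_mul h trmx0.
have hV' : V' *m L y *m Vr^T = 0.
  apply/matrixP => j l; rewrite entry_mul [RHS]mxE.
  have hvj : row j V' = adjmx (row j Vr)^T.
    by rewrite /adjmx map_trmx trmxK /V' map_row.
  rewrite hvj -/(bf _ _ _); apply: polarize (L_selfadj y) _ _ _.
  - move=> c; apply: qker => //.
    by rewrite mulmxDr -scalemxAr !kerN.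
  - by apply: qker => //; apply: kerN.
  - by apply: qker => //; apply: kerN.
have hX : L y *m Vr^T = 0.
  have hfull : (1%:M <= V' + Cp)%MS.
    apply: submx_full.
    have e : (V' + Cp :=: V' + V'^C)%MS := adds_eqmx (eqmx_refl _) (eq_row_base _).
    by rewrite /row_full e; exact: addsmx_compl_full.
  case/sub_addsmxP: hfull => [[u1 u2] /= e1].
  have e2 : (u1 *m V' + u2 *m Cp) *m (L y *m Vr^T)
      = u1 *m (V' *m L y *m Vr^T) + u2 *m (Cp *m L y *m Vr^T).
    by rewrite mulmxDl !mulmxA.
  by rewrite -[L y *m _]mul1mx e1 e2 hV' hCp !mulmx0 addr0.
move=> v hv; have : (v^T <= Vr)%MS.
  by rewrite /Vr (eq_row_base Kmx); apply/sub_kermxP; rewrite -trmx_mul hv trmx0.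
by case/submxP => c hc; rewrite -[v]trmxK hc trmx_mul mulmxA hX mul0mx.
Qed.

Lemma N_selfadj : selfadjmx N.
Proof. by rewrite /selfadjmx /N adjmxB adjmx1 hA. Qed.

Lemma factor y : (forall v : 'cV[C]_d, N *m v = 0 -> L y *m v = 0) ->
  exists G, L y = N *m G *m N.
Proof.
move=> hk.
have hc : L y *m cokermx N = 0.
  apply/matrixP => i j; rewrite [RHS]mxE.
  have hcol : N *m col j (cokermx N) = 0 by rewrite colE mulmxA mulmx_coker mul0mx.
  have := hk _ hcol; rewrite colE mulmxA -colE.
  by move/(congr1 (fun M : 'cV[C]_d => M i 0)); rewrite !mxE.
have hs : (L y <= N)%MS by rewrite submxE hc.
set B := L y *m pinvmx N.
have e2 : L y = N *m adjmx B.
  have := L_selfadj y; rewrite /selfadjmx => <-.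
  by rewrite -[in LHS](mulmxKpV hs) -/B adjmxM N_selfadj.
exists (adjmx B *m pinvmx N).
by rewrite mulmxA -e2 mulmxKpV.
Qed.

Lemma sum_e0sq : \sum_i e0 i ^+ 2 = 1.
Proof.
by rewrite (eq_bigr (fun i => e0 i * e0 i)) ?sum_e0 /e0 ?eqxx // => i _; rewrite expr2.
Qed.

Lemma final : False.
Proof.
have [y [[j hj] [hyi0 hyk]]] := exists_y.
have [G hG] := factor hyk.
have [c hc0 hc] := crude G.
have hQN : forall w, 0 <= Q w N.
  move=> w; apply: psd_Q; have := H2 (x := e0); rewrite /K L_e0; apply.
  by rewrite sum_e0sq.
have hQP : forall w, 0 <= Q w (1%:M + A i0).
  move=> w; apply: psd_Q.
  have hL : L (fun i => - e0 i) = - A i0.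
    rewrite /L -L_e0 /L -sumrN; apply: eq_bigr => i _.
    by rewrite rmorphN scaleNr.
  have := H2 (x := fun i => - e0 i); rewrite /K hL opprK; apply.
  by under eq_bigr do rewrite sqrrN; rewrite sum_e0sq.
have hNNsa : selfadjmx (N *m N).
  by rewrite /selfadjmx adjmxM N_selfadj.
have hNN : forall w, Q w (N *m N) <= 2 * Q w N.
  move=> w; set a := N *m w.
  have hadj : adjmx a = adjmx w *m N by rewrite /a adjmxM N_selfadj.
  have hb1 : bf a w N = q w (N *m N) by rewrite /bf /q hadj !mulmxA.
  have hb2 : bf w a N = q w (N *m N) by rewrite /bf /q /a !mulmxA.
  have hqa1 : Q a 1%:M = Q w (N *m N).
    by rewrite /Q /q hadj mulmx1 /a !mulmxA.
  have hqaN : Q a N <= 2 * Q w (N *m N).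
    have := hQP a; rewrite QD -hqa1 /N QB; lra.
  have := hQN (a + (-2)%:C *: w).
  rewrite /Q q_addZ hb1 hb2 conj_real (q_selfadj w hNNsa) (q_selfadj w N_selfadj).
  rewrite !ReD -!rmorphM !Re_real -/(Q a N).
  lra.
have hLy : forall w, `|Q w (L y)| <= 2 * c * Q w N.
  move=> w; have e : Q w (L y) = complex.Re (q (N *m w) G).
    by rewrite /Q hG /q adjmxM N_selfadj !mulmxA.
  rewrite e; apply: le_trans (hc _) _.
  have -> : Q (N *m w) 1%:M = Q w (N *m N).
    by rewrite /Q /q adjmxM N_selfadj mulmx1 !mulmxA.
  have := hNN w; have := hQN w; nra.
set s := (2 * c + 1)^-1.
have hs0 : 0 < s by rewrite /s invr_gt0; lra.
have hs1 : s * (2 * c + 1) = 1 by rewrite /s mulVf //; apply: lt0r_neq0; lra.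
pose z := fun i => e0 i + s * y i.
have hLz : L z = A i0 + s%:C *: L y.
  have -> : L z = L (fun i => 1 * e0 i + s * y i).
    by rewrite /L; apply: eq_bigr => i _; rewrite mul1r.
  by rewrite L_lin rmorph1 scale1r L_e0.
have Kz : K z.
  apply: Q_psd; first by rewrite /selfadjmx adjmxB adjmx1 L_selfadj.
  move=> w; rewrite hLz opprD addrA -/N QB QZ.
  have h2 := le_trans (ler_norm _) (hLy w); have h3 := hQN w.
  nra.
have := H1 Kz; rewrite /z sumsq_e0 //.
have := mulr_gt0 (exprn_gt0 2 hs0) (sumsq_gt0 hj); lra.
Qed.

End Core.

Section Part3.
Variable R : realType.
Local Notation C := (R[i]).

Lemma cast_psd n n' (e : n = n') (M : 'M[C]_n) : psdmx (castmx (e, e) M) <-> psdmx M.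
Proof. by case: n' / e; rewrite castmx_id. Qed.

Lemma cast_lin g n n' (e : n = n') (F : 'I_g -> 'M[C]_n) :
  1%:M - \sum_i castmx (e, e) (F i) = castmx (e, e) (1%:M - \sum_i F i).
Proof.
case: n' / e; rewrite castmx_id.
by under eq_bigr do rewrite castmx_id.
Qed.

Lemma mx1_entry (c : C) (a b : 'I_1) : (c%:M : 'M_1) a b = c.
Proof. by rewrite (ord1 a) (ord1 b) mxE eqxx mulr1n. Qed.

Lemma tens11 (P P' : 'M[C]_1) : (P *t P') 0 0 = P 0 0 * P' 0 0.
Proof.
rewrite mxE; have h : forall a b c e : 'I_1, P a b * P' c e = P 0 0 * P' 0 0.
  by move=> a b c e; rewrite (ord1 a) (ord1 b) (ord1 c) (ord1 e).
exact: h.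
Qed.

Lemma adjmx_tens m n p r (M1 : 'M[C]_(m, n)) (M2 : 'M[C]_(p, r)) :
  adjmx (M1 *t M2) = adjmx M1 *t adjmx M2.
Proof. by rewrite /adjmx map_mxT trmx_tens. Qed.

Lemma q_tens m (u : 'cV[C]_m) (M1 M2 : 'M[C]_m) :
  q (u *t u) (M1 *t M2) = q u M1 * q u M2.
Proof.
rewrite /q; have e := adjmx_tens u u; rewrite [adjmx (u *t u)]e.
rewrite (tensmx_mul (adjmx u) (adjmx u) M1 M2) (tensmx_mul (adjmx u *m M1) (adjmx u *m M2) u u).
by rewrite tens11.
Qed.

Lemma q_tens1 m (u : 'cV[C]_m) : q (u *t u) 1%:M = q u 1%:M * q u 1%:M.
Proof.
rewrite /q !mulmx1; have e := adjmx_tens u u; rewrite [adjmx (u *t u)]e.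
by rewrite (tensmx_mul (adjmx u) (adjmx u) u u) tens11.
Qed.

Variables (g d : nat) (A : 'I_g -> 'M[C]_d).
Hypothesis hA : forall j, selfadjmx (A j).

Definition X1 (x : 'I_g -> R) : 'I_g -> 'M[C]_1 := fun i => ((x i)%:C)%:M.

Lemma SM_X1 x : SMtuple (X1 x).
Proof. by move=> i; rewrite /selfadjmx /X1 adjmx_scalar conj_real. Qed.

Lemma lev1 x : LMIdom A (X1 x) <-> LMIdom1 A x.
Proof.
rewrite /LMIdom /LMIdom1 /X1.
have -> : \sum_i (A i *t ((x i)%:C)%:M) =
     \sum_i castmx (esym (muln1 d), esym (muln1 d)) ((x i)%:C *: A i).
  by apply: eq_bigr => i _; rewrite tens_mx_scalar.
rewrite cast_lin cast_psd; split; first by case.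
by move=> h; split => //; apply: SM_X1.
Qed.

Lemma q_const1 (M : 'M[C]_1) : q (const_mx 1) M = M 0 0.
Proof.
rewrite /q !mxE big_ord1 !mxE big_ord1 !mxE rmorph1 mul1r mulr1.
by rewrite (ord1 (_ : 'I_1)).
Qed.

Section Eq.
Hypothesis heq : LMIdom A = freepolar (LMIdom A).

Lemma H1p2 x : LMIdom1 A x -> \sum_i x i ^+ 2 <= 1.
Proof.
move=> hx; have hx1 := (proj2 (lev1 x)) hx.
have := hx1; rewrite {1}heq => -[_ /(_ 1%N (X1 x) hx1) hp].
have := psd_Q (const_mx 1) hp; rewrite /Q q_const1 mxE [X in complex.Re (_ + X)]mxE summxE mx1_entry.
rewrite ReD ReN Re_sum /=.
have -> : \sum_i complex.Re ((X1 x i *t X1 x i) 0 0) = \sum_i x i ^+ 2.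
  by apply: eq_bigr => i _; rewrite tens11 !mx1_entry -rmorphM expr2.
lra.
Qed.

Lemma H2p2 x : \sum_i x i ^+ 2 <= 1 -> LMIdom1 A x.
Proof.
move=> hx; apply/lev1; rewrite heq; split; first exact: SM_X1.
move=> m Y hY; have hYsa := hY.1.
have hYY : psdmx (1%:M - \sum_i (Y i *t Y i)).
  by move: (hY); rewrite {1}heq => -[_ /(_ m Y hY)].
have -> : \sum_i (Y i *t X1 x i) =
     \sum_i castmx (esym (muln1 m), esym (muln1 m)) ((x i)%:C *: Y i).
  by apply: eq_bigr => i _; rewrite /X1 tens_mx_scalar.
rewrite cast_lin cast_psd; apply: Q_psd.
  rewrite /selfadjmx adjmxB adjmx1 adjmx_sum; congr (_ - _).
  by apply: eq_bigr => i _; rewrite adjmxZ conj_real hYsa.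
move=> u; rewrite QB Q_sum.
set T := Q u 1%:M.
have hT : 0 <= T by apply: Q1_ge0.
have hphi : \sum_i Q u (Y i) ^+ 2 <= T ^+ 2.
  have := psd_Q (u *t u) hYY; rewrite QB Q_sum /Q q_tens1.
  rewrite (q_selfadj u (adjmx1 _ _)) -rmorphM Re_real.
  have -> : \sum_i complex.Re (q (u *t u) (Y i *t Y i)) = \sum_i Q u (Y i) ^+ 2.
    by apply: eq_bigr => i _; rewrite q_tens (q_selfadj u (hYsa i)) -rmorphM expr2.
  rewrite /T /Q expr2; lra.
under eq_bigr do rewrite QZ.
have hS : (\sum_i x i * Q u (Y i)) *+ 2 * T <=
          T ^+ 2 * \sum_i x i ^+ 2 + \sum_i Q u (Y i) ^+ 2.
  rewrite -sumrMnl mulr_suml mulr_sumr -big_split /=; apply: ler_sum => i _.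
  have := sqr_ge0 (T * x i - Q u (Y i)); nra.
have [T0|Tpos] := eqVneq T 0.
  have h0 : forall i, Q u (Y i) = 0.
    move=> i; apply/eqP; rewrite -sqrf_eq0 eq_le sqr_ge0 andbT.
    have h0 : \sum_i Q u (Y i) ^+ 2 <= 0 by move: hphi; rewrite T0 expr0n.
    apply: le_trans h0; rewrite (bigD1 i) //= lerDl.
    by apply: sumr_ge0 => j _; apply: sqr_ge0.
  rewrite big1 ?subr0 // => i _; rewrite h0 mulr0 //.
have hTp : 0 < T by rewrite lt_def Tpos hT.
have := ler_wpM2l (sqr_ge0 T) hx; rewrite mulr1 => hx2.
set S := \sum_i x i * Q u (Y i) in hS *.
have h3 : (T - S) * T >= 0 by rewrite mulr2n in hS; nra.
have : 0 <= T - S by rewrite -(pmulr_lge0 _ hTp).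
lra.
Qed.

End Eq.

End Part3.

Local Close Scope complex_scope.
Unset Implicit Arguments. Set Strict Implicit.

Theorem mainTheorem20 (R : realType) (d g : nat) (A : 'I_g -> 'M[R[i]]_d) :
  (3 <= d)%N -> (d ^ 2 - d + 2 <= g)%N -> (g <= d ^ 2 - 1)%N ->
  (forall j, selfadjmx (A j)) ->
  freebounded (LMIdom A) ->
  LMIdom1 A <> polar1 (LMIdom1 A) /\ LMIdom A <> freepolar (LMIdom A).
Proof.
move=> hd hg1 hg2 hA _.
have hg : forall k, (k <= d)%N -> (2 * (k * (d - k)) + 1 < g)%N.
  move=> k hk; apply: leq_trans hg1.
  have e : d = (k + (d - k))%N by rewrite subnKC.
  move: (d - k)%N e => m e; rewrite e; nia.
have g0 : (0 < g)%N by have := hg 0%N (leq0n d); lia.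
pose i0 : 'I_g := Ordinal g0.
split.
- move=> heq.
  have H1 : forall x, LMIdom1 A x -> \sum_i x i ^+ 2 <= 1.
    move=> x hx; have : polar1 (LMIdom1 A) x by rewrite -heq.
    by move/(_ x hx); under eq_bigr do rewrite -expr2.
  apply: (final hA i0 H1 _ hg) => x hx.
  rewrite /K -/(LMIdom1 A x) heq => y hy.
  have hy1 := H1 y hy.
  have hS : \sum_i (x i * y i) *+ 2 <= \sum_i (x i ^+ 2 + y i ^+ 2).
    apply: ler_sum => i _; have := sqr_ge0 (x i - y i); nra.
  rewrite sumrMnl big_split in hS.
  have hx' : \sum_i x i ^+ 2 <= 1 := hx.
  have hS' : (\sum_i x i * y i) *+ 2 <= \sum_i x i ^+ 2 + \sum_i y i ^+ 2 := hS.
  rewrite mulr2n in hS'; lra.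
- move=> heq; exact: (final hA i0 (H1p2 heq) (H2p2 heq) hg).
Qed.
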